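(* Let $q>0$ with $q\neq1$, let $y:\mathbb{R}\to\mathbb{R}^2$ be a $2\pi$-periodic $C^2$ map, and let $\eta\in\mathbb{S}^1$. Define $\psi_\eta(\theta,\theta_\xi)=(\sqrt{q}\,\eta+\xi)\cdot y(\theta)$ and $\Psi_\eta(\theta,\theta_\xi)=-(\sqrt{q}\,\eta-\xi)\cdot y'(\theta)^\perp$, where $\xi=(\cos\theta_\xi,\sin\theta_\xi)^T$. If $(\theta,\theta_\xi)$ satisfies $\partial\psi_\eta/\partial\theta(\theta,\theta_\xi)=(\sqrt{q}\,\eta+\xi)\cdot y'(\theta)=0$, then $\Psi_\eta(\theta,\theta_\xi)=0$ if and only if $y'(\theta)=0$.
   Context: For $x=(x_1,x_2)^T\in\mathbb{R}^2$, $x^\perp=(-x_2,x_1)^T$. *)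

(* Defs.v *)
From Stdlib Require Import Reals.
From Coquelicot Require Import Coquelicot.
Open Scope R_scope.

Definition vec2 := (R * R)%type.
Definition dot (u v : vec2) : R := fst u * fst v + snd u * snd v.
Definition perp (x : vec2) : vec2 := (- snd x, fst x).
Definition vadd (u v : vec2) : vec2 := (fst u + fst v, snd u + snd v).
Definition vsub (u v : vec2) : vec2 := (fst u - fst v, snd u - snd v).
Definition vscal (a : R) (u : vec2) : vec2 := (a * fst u, a * snd u).

Definition C2fun (f : R -> R) : Prop :=
  forall x, ex_derive f x /\ ex_derive (Derive f) x /\
            continuous (Derive (Derive f)) x.

Definition periodic_C2_map (y : R -> vec2) : Prop :=
  (forall t, y (t + 2 * PI) = y t) /\
  C2fun (fun t => fst (y t)) /\ C2fun (fun t => snd (y t)).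

Definition dy (y : R -> vec2) (t : R) : vec2 :=
  (Derive (fun s => fst (y s)) t, Derive (fun s => snd (y s)) t).

Definition unit_circle (eta : vec2) : Prop := fst eta ^ 2 + snd eta ^ 2 = 1.

Definition xi_of (thxi : R) : vec2 := (cos thxi, sin thxi).

Definition psi_eta (q : R) (y : R -> vec2) (eta : vec2) (th thxi : R) : R :=
  dot (vadd (vscal (sqrt q) eta) (xi_of thxi)) (y th).

Definition Psi_eta (q : R) (y : R -> vec2) (eta : vec2) (th thxi : R) : R :=
  - dot (vsub (vscal (sqrt q) eta) (xi_of thxi)) (perp (dy y th)).

(* Main.v *)
Require Import Defs.
From Stdlib Require Import Reals Lra.
From Coquelicot Require Import Coquelicot.
Open Scope R_scope.

Theorem lemma1 (q : R) (y : R -> vec2) (eta : vec2) (th thxi : R) :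
  0 < q -> q <> 1 -> periodic_C2_map y -> unit_circle eta ->
  Derive (fun t => psi_eta q y eta t thxi) th = 0 ->
  dot (vadd (vscal (sqrt q) eta) (xi_of thxi)) (dy y th) = 0 ->
  (Psi_eta q y eta th thxi = 0 <-> dy y th = (0, 0)).
Proof.
  intros hq hq1 _ hu _ ha.
  unfold Psi_eta.
  destruct (dy y th) as [d1 d2] eqn:E.
  destruct eta as [e1 e2].
  unfold unit_circle, dot, vadd, vsub, vscal, perp, xi_of in *; simpl in *.
  assert (hs : sqrt q * sqrt q = q) by (apply sqrt_sqrt; lra).
  assert (hcs := sin2_cos2 thxi). unfold Rsqr in hcs.
  set (s := sqrt q) in *. set (c := cos thxi) in *. set (n := sin thxi) in *.
  set (a1 := s*e1 + c) in *. set (a2 := s*e2 + n) in *.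
  assert (hab : (s*e1+c)*(s*e1-c) + (s*e2+n)*(s*e2-n) = q - 1).
  { replace ((s*e1+c)*(s*e1-c) + (s*e2+n)*(s*e2-n)) with
      ((s*s)*(e1*e1+e2*e2) - (n*n+c*c)) by ring.
    assert (hu' : e1*e1+e2*e2 = 1) by (rewrite <- hu; ring). rewrite hs, hu', hcs. ring. }
  split.
  - intro hp.
    set (b1 := s*e1 - c) in *. set (b2 := s*e2 - n) in *.
    assert (hb : b2 * d1 = b1 * d2) by lra.
    assert (h1 : (q-1) * d1 = 0).
    { rewrite <- hab. fold a1 a2 b1 b2.
      replace ((a1*b1 + a2*b2)*d1) with (b1*(a1*d1+a2*d2) + a2*(b2*d1 - b1*d2)) by ring.
      rewrite ha, hb. ring. }
    assert (h2 : (q-1) * d2 = 0).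
    { rewrite <- hab. fold a1 a2 b1 b2.
      replace ((a1*b1 + a2*b2)*d2) with (b2*(a1*d1+a2*d2) - a1*(b2*d1 - b1*d2)) by ring.
      rewrite ha, hb. ring. }
    assert (hq0 : q - 1 <> 0) by lra.
    apply Rmult_integral in h1; apply Rmult_integral in h2.
    destruct h1 as [h1|h1]; [contradiction|]; destruct h2 as [h2|h2]; [contradiction|].
    rewrite h1, h2; reflexivity.
  - intro h; injection h; intros -> ->; ring.
Qed.
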